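(* Assume $N\ge 2$ and $2\beta T>1$, and let $S\ge 1$ be an integer. (a) The Fixed-Share Forecaster (FSF) with parameters \[ \alpha=\frac1T,\qquad \gamma=\frac{1}{2\beta T},\qquad \eta=\sqrt{\frac{\log(NT)}{4\beta^2T\log\left(2\beta TN^3+N+2\right)}} \] satisfies, for every demand sequence $d_1,\dots,d_T\in\mathcal D$, \[ \mathbb E[\mathcal R_S(T)]\le 2(S+1)\beta\sqrt{T\log(NT)\log\left(2\beta TN^3+N+2\right)}+2\beta\sqrt{T\log N}+2. \] (b) The FSF with parameters \[ \alpha=\frac1T,\qquad \gamma=\frac{1}{2\beta T},\qquad \eta=\sqrt{\frac{S\log(NT)}{4\beta^2T\log\left(2\beta TN^3+N+2\right)}} \] satisfies, for every demand sequence $d_1,\dots,d_T\in\mathcal D$, \[ \mathbb E[\mathcal R_S(T)]\le 4\beta\sqrt{ST\log(NT)\log\left(2\beta TN^3+N+2\right)}+2\beta\sqrt{T\log N}+2. \]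
   Context: Fix integers $T\ge1$, $D\ge 1$ and reals $h,b>0$. Let $\mathcal T=\{1,\dots,T\}$, $\mathcal D=\{0,1,\dots,D\}$, let $\mathcal I\subseteq\mathcal D$ with $|\mathcal I|=N$, let $\beta=D\max\{h,b\}$, and let $c(i,d)=h(i-d)^+ + b(d-i)^+$. Logarithms are natural. For $d\in\mathcal D$, $e_d\in\mathbb R^{D+1}$ is the standard basis vector (coordinates indexed by $\{0,\dots,D\}$) with a $1$ in coordinate $d$. For $i\in\mathcal D$, the signal matrix $\mathbb S_i$ is the $(i+1)\times(D+1)$ $0/1$ matrix with rows indexed by $k\in\{1,\dots,i+1\}$ and columns by $d\in\{0,\dots,D\}$, with $\mathbb S_i(k,d)=1$ iff $\min\{i,d\}=k-1$; and $v_i\in\mathbb R^{i+1}$ is defined by $v_i(k)=hi-(h+b)(k-1)$, $k=1,\dots,i+1$. A demand sequence $d_1,\dots,d_T\in\mathcal D$ is fixed arbitrarily in advance. FSF policy with parameters $\eta>0$, $\gamma\in(0,1)$, $\alpha>0$: set $W_i(0)=1$ for all $i\in\mathcal I$. For $t=1,\dots,T$: let $W(t-1)=\sum_{i\in\mathcal I}W_i(t-1)$ and $p_i(t)=(1-\gamma)\frac{W_i(t-1)}{W(t-1)}+\frac{\gamma}{N}$; draw $I_t\in\mathcal I$ with $\mathbb P(I_t=i\mid I_1,\dots,I_{t-1})=p_i(t)$; observe $\min\{I_t,d_t\}$; for each $i\in\mathcal I$ compute $\tilde c(i,d_t)=\frac{\mathbb 1\{I_t\ge i\}}{\mathbb P_t(I_t\ge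 i)}\left(v_i^T\mathbb S_ie_{d_t}+\beta\right)$ with $\mathbb P_t(I_t\ge i)=\sum_{j\in\mathcal I,\,j\ge i}p_j(t)$; and set $W_i(t)=W_i(t-1)e^{-\eta\tilde c(i,d_t)}+\frac{\alpha}{N}\sum_{j\in\mathcal I}W_j(t-1)$. For a sequence $i_{[T]}=(i_1,\dots,i_T)\in\mathcal I^T$, its complexity is $C(i_{[T]})=\sum_{t=1}^{T}\mathbb 1\{i_t\ne i_{t+1}\}$ with the convention that the term for $t=T$ equals $1$ (so $C(i_{[T]})$ is the number of maximal blocks of consecutive periods on which $i_{[T]}$ is constant). Let $\mathcal I^T_S=\{i_{[T]}\in\mathcal I^T: C(i_{[T]})\le S\}$. The tracking regret is $\mathcal R_S(T)=\sum_{t\in\mathcal T}c(I_t,d_t)-\min_{i_{[T]}\in\mathcal I^T_S}\sum_{t\in\mathcal T}c(i_t,d_t)$; expectation is over the policy's randomization. *)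

(* Defs.v *)
From Stdlib Require Import Reals List Lia Lra.
Import ListNotations.
Open Scope R_scope.

Definition rsum (l : list R) : R := fold_right Rplus 0 l.

Definition cost (h b : R) (i d : nat) : R :=
  h * Rmax (INR i - INR d) 0 + b * Rmax (INR d - INR i) 0.

Definition beta (D : nat) (h b : R) : R := INR D * Rmax h b.

(* signal matrix S_i : entry (k,d), k in {1..i+1}, d in {0..D};
   equals 1 iff min{i,d} = k-1 *)
Definition sigmx (i k d : nat) : R :=
  if Nat.eqb (Nat.min i d) (k - 1)%nat then 1 else 0.

Definition vvec (h b : R) (i k : nat) : R := h * INR i - (h + b) * INR (k - 1).

Definition vSe (h b : R) (i d : nat) : R :=
  rsum (map (fun k => vvec h b i k * sigmx i k d) (seq 1 (i + 1))).

Definition Wtot (I : list nat) (W : nat -> R) : R := rsum (map W I).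

Definition pprob (I : list nat) (gamma : R) (W : nat -> R) (i : nat) : R :=
  (1 - gamma) * (W i / Wtot I W) + gamma / INR (length I).

Definition Pge (I : list nat) (gamma : R) (W : nat -> R) (i : nat) : R :=
  rsum (map (pprob I gamma W) (filter (fun j => Nat.leb i j) I)).

(* importance-weighted cost estimate  c~(i, d_t), given the drawn action a = I_t *)
Definition ctilde (h b : R) (D : nat) (I : list nat) (gamma : R) (W : nat -> R)
  (a i dt : nat) : R :=
  (if Nat.leb i a then 1 else 0) / Pge I gamma W i * (vSe h b i dt + beta D h b).

Definition Wnext (h b : R) (D : nat) (I : list nat) (eta gamma alpha : R)
  (W : nat -> R) (a dt : nat) : nat -> R :=
  fun i => W i * exp (- eta * ctilde h b D I gamma W a i dt)
           + alpha / INR (length I) * Wtot I W.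

(* Probability that the FSF policy draws the sequence [I_t; I_{t+1}; ...]
   given the weight vector W = W(t-1) at the start of period t:
   product of the conditional probabilities p_{I_s}(s). *)
Fixpoint seq_prob (h b : R) (D : nat) (I : list nat) (eta gamma alpha : R)
  (d : nat -> nat) (t : nat) (W : nat -> R) (hist : list nat) : R :=
  match hist with
  | [] => 1
  | a :: r => pprob I gamma W a *
              seq_prob h b D I eta gamma alpha d (S t)
                (Wnext h b D I eta gamma alpha W a (d t)) r
  end.

Definition FSF_prob (h b : R) (D : nat) (I : list nat) (eta gamma alpha : R)
  (d : nat -> nat) (s : list nat) : R :=
  seq_prob h b D I eta gamma alpha d 1 (fun _ => 1) s.

Fixpoint path_cost (h b : R) (d : nat -> nat) (t : nat) (s : list nat) : R :=
  match s with
  | [] => 0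
  | a :: r => cost h b a (d t) + path_cost h b d (S t) r
  end.

Fixpoint all_seqs (I : list nat) (n : nat) : list (list nat) :=
  match n with
  | O => [[]]
  | S n' => flat_map (fun a => map (cons a) (all_seqs I n')) I
  end.

Fixpoint complexity (s : list nat) : nat :=
  match s with
  | [] => 0
  | [x] => 1
  | x :: ((y :: _) as r) => ((if Nat.eqb x y then 0 else 1) + complexity r)%nat
  end.

Definition list_min (l : list R) : R :=
  match l with
  | [] => 0
  | x :: r => fold_right Rmin x r
  end.

Definition benchmark (h b : R) (I : list nat) (d : nat -> nat) (T S : nat) : R :=
  list_min (map (path_cost h b d 1)
    (filter (fun s => Nat.leb (complexity s) S) (all_seqs I T))).

(* E[R_S(T)] for FSF with parameters eta, gamma, alpha: expectation over the
   policy's randomization, i.e. sum over all realizations (I_1..I_T) in I^T *)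
Definition FSF_expected_regret (h b : R) (D : nat) (I : list nat)
  (eta gamma alpha : R) (d : nat -> nat) (T S : nat) : R :=
  rsum (map (fun s => FSF_prob h b D I eta gamma alpha d s *
                      (path_cost h b d 1 s - benchmark h b I d T S))
            (all_seqs I T)).

(* Main.v *)
Require Import Defs.
From Stdlib Require Import Reals List Lra Lia.
From Coquelicot Require Coquelicot.
Import ListNotations.
Open Scope R_scope.

Module Aux.
Import Coquelicot.Coquelicot.
Lemma g_incr : forall x, 0 <= x -> 1 <= (1 - x + x^2/2) * exp x.
Proof.
  intros x Hx. destruct (Req_dec x 0) as [->|Hn].
  - rewrite exp_0. lra.
  - destruct (MVT_cor2 (fun x => (1 - x + x^2/2) * exp x) (fun x => x^2/2 * exp x) 0 x) as [c [Hc1 Hc2]].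
    + lra.
    + intros c _. apply is_derive_Reals. auto_derive; auto. field.
    + rewrite exp_0 in Hc1. assert (0 <= c^2/2*exp c * (x - 0)).
      { apply Rmult_le_pos; [|lra]. apply Rmult_le_pos; [|left; apply exp_pos]. nra. }
      lra.
Qed.
End Aux.

Lemma exp_neg_le : forall x, 0 <= x -> exp (- x) <= 1 - x + x^2/2.
Proof.
  intros x Hx. pose proof (Aux.g_incr x Hx) as H. rewrite exp_Ropp.
  pose proof (exp_pos x).
  apply (Rmult_le_reg_r (exp x)); auto. rewrite Rinv_l; lra.
Qed.

Lemma ln_le' : forall x y, 0 < x -> x <= y -> ln x <= ln y.
Proof. intros x y Hx [H|H]. left; apply ln_increasing; auto. subst; lra. Qed.

Lemma ln_le_sub1 : forall y, 0 < y -> ln y <= y - 1.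
Proof. intros y Hy. pose proof (exp_ineq1_le (ln y)). rewrite exp_ln in H; lra. Qed.

Lemma ln_div : forall x y, 0 < x -> 0 < y -> ln (x / y) = ln x - ln y.
Proof. intros. unfold Rdiv. rewrite ln_mult by (auto; apply Rinv_0_lt_compat; auto).
  rewrite ln_Rinv by auto. lra. Qed.

Lemma rsum_cons : forall a l, rsum (a :: l) = a + rsum l.
Proof. reflexivity. Qed.

Lemma rsum_plus {A} : forall (f g : A -> R) l,
  rsum (map (fun x => f x + g x) l) = rsum (map f l) + rsum (map g l).
Proof. induction l; simpl map; [unfold rsum; simpl; lra|]. rewrite !rsum_cons, IHl. lra. Qed.

Lemma rsum_minus {A} : forall (f g : A -> R) l,
  rsum (map (fun x => f x - g x) l) = rsum (map f l) - rsum (map g l).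
Proof. induction l; simpl map; [unfold rsum; simpl; lra|]. rewrite !rsum_cons, IHl. lra. Qed.

Lemma rsum_scal {A} : forall (c : R) (f : A -> R) l,
  rsum (map (fun x => c * f x) l) = c * rsum (map f l).
Proof. induction l; simpl map; [unfold rsum; simpl; lra|]. rewrite !rsum_cons, IHl. lra. Qed.

Lemma rsum_const {A} : forall (c : R) (l : list A),
  rsum (map (fun _ => c) l) = INR (length l) * c.
Proof. induction l; simpl map; [unfold rsum; simpl; lra|]. rewrite !rsum_cons, IHl.
  simpl length. rewrite S_INR. lra. Qed.

Lemma rsum_ext {A} : forall (f g : A -> R) l, (forall x, In x l -> f x = g x) ->
  rsum (map f l) = rsum (map g l).
Proof. induction l; intros H; simpl map; auto. rewrite !rsum_cons.
  rewrite (H a), IHl; simpl; auto. intros; apply H; simpl; auto. Qed.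

Lemma rsum_le {A} : forall (f g : A -> R) l, (forall x, In x l -> f x <= g x) ->
  rsum (map f l) <= rsum (map g l).
Proof. induction l; intros H; simpl map; [unfold rsum; simpl; lra|]. rewrite !rsum_cons.
  pose proof (H a (or_introl eq_refl)). pose proof (IHl (fun x Hx => H x (or_intror Hx))). lra. Qed.

Lemma rsum_nonneg {A} : forall (f : A -> R) l, (forall x, In x l -> 0 <= f x) ->
  0 <= rsum (map f l).
Proof. intros. pose proof (rsum_le (fun _ => 0) f l H). rewrite rsum_const in H0. lra. Qed.

Lemma rsum_ge_mem {A} : forall (f : A -> R) l y, (forall x, In x l -> 0 <= f x) -> In y l ->
  f y <= rsum (map f l).
Proof. induction l; intros y H Hy; [destruct Hy|]. simpl map. rewrite rsum_cons. simpl in Hy.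
  destruct Hy as [->|Hy].
  - pose proof (rsum_nonneg f l (fun x Hx => H x (or_intror Hx))). lra.
  - pose proof (IHl y (fun x Hx => H x (or_intror Hx)) Hy). pose proof (H a (or_introl eq_refl)). lra.
Qed.

Lemma rsum_swap {A B} : forall (g : A -> B -> R) l1 l2,
  rsum (map (fun a => rsum (map (fun i => g a i) l2)) l1) =
  rsum (map (fun i => rsum (map (fun a => g a i) l1)) l2).
Proof. induction l1; intros; simpl map.
  - change (0 = rsum (map (fun _ : B => 0) l2)). rewrite rsum_const; ring.
  - rewrite rsum_cons, IHl1. rewrite <- rsum_plus. apply rsum_ext. intros. reflexivity.
Qed.

Lemma rsum_filter : forall (P : nat -> bool) (f : nat -> R) l,
  rsum (map f (filter P l)) = rsum (map (fun x => if P x then f x else 0) l).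
Proof. induction l; [reflexivity|]. simpl filter. simpl map. rewrite (rsum_cons (if P a then f a else 0)). destruct (P a); simpl map; rewrite ?rsum_cons, IHl; lra. Qed.

Lemma rsum_app : forall l1 l2, rsum (l1 ++ l2) = rsum l1 + rsum l2.
Proof. induction l1; intros; simpl app. unfold rsum; simpl; ring. rewrite !rsum_cons, IHl1. ring. Qed.

Lemma rsum_flat_map {A B} : forall (F : B -> R) (G : A -> list B) l,
  rsum (map F (flat_map G l)) = rsum (map (fun a => rsum (map F (G a))) l).
Proof. induction l; [reflexivity|]. simpl flat_map. rewrite map_app, rsum_app, IHl.
  simpl map. rewrite rsum_cons. reflexivity. Qed.

Lemma NoDup_remove' : forall (x : nat) l, NoDup l -> NoDup (remove Nat.eq_dec x l).
Proof. induction l; intros H; simpl; auto. inversion H; subst.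
  destruct (Nat.eq_dec x a); auto. constructor; auto.
  intro Hin. apply in_remove in Hin. tauto. Qed.

Lemma rsum_remove : forall (f : nat -> R) l x, NoDup l -> In x l ->
  rsum (map f l) = f x + rsum (map f (remove Nat.eq_dec x l)).
Proof. induction l; intros x Hnd Hin; [destruct Hin|]. simpl in Hin. inversion Hnd; subst.
  destruct (Nat.eq_dec x a).
  - subst. rewrite remove_cons, notin_remove; auto.
  - destruct Hin as [->|Hin]; [congruence|]. simpl remove.
    destruct (Nat.eq_dec x a); [congruence|]. simpl map. rewrite !rsum_cons, (IHl x); auto. lra.
Qed.

Definition tailw (I : list nat) (w : nat -> R) (i : nat) : R :=
  rsum (map (fun j => if Nat.leb i j then w j else 0) I).

Lemma min_exists : forall I : list nat, I <> [] -> exists i0, In i0 I /\ forall j, In j I -> (i0 <= j)%nat.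
Proof.
  induction I as [|a I IH]; intros H; [congruence|].
  destruct I as [|c I'].
  - exists a. split; [left; auto|]. intros j [->|[]]. lia.
  - destruct (IH ltac:(discriminate)) as [i0 [Hi Hm]].
    destruct (Nat.le_gt_cases a i0).
    + exists a. split; [left; auto|]. intros j [->|Hj]; [lia|]. specialize (Hm j Hj). lia.
    + exists i0. split; [right; auto|]. intros j [->|Hj]; [lia|]. auto.
Qed.

Lemma tele : forall n I, (length I <= n)%nat -> NoDup I -> I <> [] ->
  forall w m, 0 < m -> (forall i, In i I -> m <= w i) ->
  rsum (map (fun i => w i / tailw I w i) I) <= 1 + ln (rsum (map w I) / m).
Proof.
  induction n; intros I Hlen Hnd Hne w m Hm Hw.
  - destruct I; simpl in Hlen; [congruence|lia].
  - destruct (min_exists I Hne) as [i0 [Hi0 Hmin]].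
    set (Rl := remove Nat.eq_dec i0 I).
    assert (Htot : rsum (map w I) = w i0 + rsum (map w Rl)) by (apply rsum_remove; auto).
    assert (HF : rsum (map (fun i => w i / tailw I w i) I) =
                 w i0 / tailw I w i0 + rsum (map (fun i => w i / tailw I w i) Rl))
      by (apply (rsum_remove (fun i => w i / tailw I w i)); auto).
    assert (Ht0 : tailw I w i0 = rsum (map w I)).
    { unfold tailw. apply rsum_ext. intros j Hj. specialize (Hmin j Hj).
      destruct (Nat.leb_spec i0 j); [auto|lia]. }
    assert (HtR : forall i, In i Rl -> tailw I w i = tailw Rl w i).
    { intros i Hi. unfold tailw. rewrite (rsum_remove _ I i0) by auto.
      apply in_remove in Hi. destruct Hi as [Hi Hne'].
      specialize (Hmin i Hi). destruct (Nat.leb_spec i i0); [lia|]. fold Rl. lra. }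
    assert (HFR : rsum (map (fun i => w i / tailw I w i) Rl) = rsum (map (fun i => w i / tailw Rl w i) Rl)).
    { apply rsum_ext. intros i Hi. rewrite HtR; auto. }
    rewrite HF, HFR, Ht0.
    assert (Hw0 : m <= w i0) by auto.
    assert (HwR : forall i, In i Rl -> m <= w i) by (intros i Hi; apply in_remove in Hi; apply Hw; tauto).
    assert (HtotR : 0 <= rsum (map w Rl)) by (apply rsum_nonneg; intros; pose proof (HwR x H); lra).
    assert (Hcase : Rl = [] \/ Rl <> []) by (destruct Rl; [left|right]; auto; discriminate).
    assert (HndR : NoDup Rl) by (apply NoDup_remove'; auto).
    assert (HlR : (length Rl <= n)%nat).
    { pose proof (remove_length_lt Nat.eq_dec I i0 Hi0). fold Rl in H. lia. }
    clearbody Rl.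
    destruct Hcase as [ER|HneR].
    + subst Rl. simpl map in *. change (rsum []) with 0 in *. rewrite Htot, !Rplus_0_r.
      replace (w i0 / w i0) with 1 by (field; lra).
      assert (0 <= ln (w i0 / m)).
      { rewrite <- ln_1. apply ln_le'. lra. apply (Rmult_le_reg_r m); auto. unfold Rdiv.
        rewrite Rmult_assoc, Rinv_l; lra. }
      lra.
    +       pose proof (IHn Rl HlR HndR HneR w m Hm HwR) as IH.
      assert (HposR : 0 < rsum (map w Rl)).
      { assert (exists r0, In r0 Rl) as [r0 Hr0] by (destruct Rl as [|r]; [congruence|exists r; left; auto]).
        pose proof (rsum_ge_mem w Rl r0 (fun x Hx => Rle_trans _ _ _ (Rlt_le _ _ Hm) (HwR x Hx)) Hr0).
        pose proof (HwR r0 Hr0). lra. }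
      rewrite Htot in *.
      set (a := w i0) in *. set (t := rsum (map w Rl)) in *.
      assert (0 < a) by lra. rewrite ln_div in IH by lra. rewrite ln_div by lra.
      pose proof (ln_le_sub1 (t / (a + t)) ltac:(apply Rdiv_lt_0_compat; lra)) as HL.
      rewrite ln_div in HL by lra.
      assert (t / (a + t) - 1 = - (a / (a + t))) by (field; lra).
      lra.
Qed.

Definition Wpos (I : list nat) (W : nat -> R) := forall i, In i I -> 0 < W i.
Definition qv (I : list nat) (W : nat -> R) (i : nat) := W i / Wtot I W.
Definition Phi (I : list nat) (W : nat -> R) (u : nat) := ln (Wtot I W) - ln (W u).

Lemma Wtot_ge : forall I W u, Wpos I W -> In u I -> W u <= Wtot I W.
Proof. intros. unfold Wtot. apply rsum_ge_mem; auto. intros. left; auto. Qed.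

Lemma Wtot_pos : forall I W, I <> [] -> Wpos I W -> 0 < Wtot I W.
Proof. intros I W Hne Hp. destruct I as [|u I']; [congruence|].
  pose proof (Wtot_ge (u::I') W u Hp (or_introl eq_refl)). pose proof (Hp u (or_introl eq_refl)). lra. Qed.

Lemma INR_len_pos : forall (I : list nat), I <> [] -> 0 < INR (length I).
Proof. intros [|a I] H; [congruence|]. simpl length. apply lt_0_INR. lia. Qed.

Lemma sum_q : forall I W, I <> [] -> Wpos I W -> rsum (map (qv I W) I) = 1.
Proof. intros. pose proof (Wtot_pos I W H H0).
  rewrite (rsum_ext _ (fun i => / Wtot I W * W i)). rewrite rsum_scal. fold (Wtot I W). field; lra.
  intros. unfold qv. field. lra. Qed.

Lemma q_nonneg : forall I W i, I <> [] -> Wpos I W -> In i I -> 0 <= qv I W i.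
Proof. intros. unfold qv. apply Rlt_le, Rdiv_lt_0_compat; auto. apply Wtot_pos; auto. Qed.

Lemma pprob_eq : forall I gamma W i, pprob I gamma W i = (1 - gamma) * qv I W i + gamma / INR (length I).
Proof. reflexivity. Qed.

Lemma pprob_ge : forall I gamma W i, I <> [] -> Wpos I W -> In i I -> 0 < gamma < 1 ->
  gamma / INR (length I) <= pprob I gamma W i.
Proof. intros. rewrite pprob_eq. pose proof (q_nonneg I W i H H0 H1). nra. Qed.

Lemma pprob_pos : forall I gamma W i, I <> [] -> Wpos I W -> In i I -> 0 < gamma < 1 ->
  0 < pprob I gamma W i.
Proof. intros. pose proof (pprob_ge I gamma W i H H0 H1 H2). pose proof (INR_len_pos I H).
  assert (0 < gamma / INR (length I)) by (apply Rdiv_lt_0_compat; lra). lra. Qed.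

Lemma sum_p : forall I gamma W, I <> [] -> Wpos I W -> rsum (map (pprob I gamma W) I) = 1.
Proof. intros. unfold pprob. rewrite rsum_plus, rsum_scal, rsum_const.
  change (rsum (map (fun x => x / Wtot I W) (map W I))) with (rsum (map (fun i => W i / Wtot I W) I)) || idtac.
  pose proof (sum_q I W H H0). unfold qv in H1. rewrite H1. pose proof (INR_len_pos I H). field. lra. Qed.

Lemma sig_sum : forall (f : nat -> R) c len s, (1 <= s)%nat ->
  rsum (map (fun k => f k * (if Nat.eqb c (k - 1) then 1 else 0)) (seq s len)) =
  if andb (Nat.leb s (c+1)) (Nat.ltb (c+1) (s + len)) then f (c+1)%nat else 0.
Proof.
  induction len; intros s Hs.
  - simpl. destruct (Nat.leb_spec s (c+1)), (Nat.ltb_spec (c+1) (s+0)); simpl; auto. lia.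
  - simpl seq. simpl map. rewrite rsum_cons, IHlen by lia.
    destruct (Nat.eqb_spec c (s - 1)).
    + destruct (Nat.leb_spec (S s) (c+1)); [|].
      * lia.
      * destruct (Nat.leb_spec s (c+1)), (Nat.ltb_spec (c+1) (s + S len)); simpl.
        -- destruct s; [lia|]. replace (c+1)%nat with (S s) by lia. ring.
        -- lia. -- lia. -- lia.
    + destruct (Nat.leb_spec (S s) (c+1)), (Nat.ltb_spec (c+1) (S s + len)),
               (Nat.leb_spec s (c+1)), (Nat.ltb_spec (c+1) (s + S len)); simpl; try ring; try lia.
Qed.

Lemma vSe_eq : forall h b i dd, vSe h b i dd = cost h b i dd - b * INR dd.
Proof.
  intros. unfold vSe, sigmx.
  rewrite (sig_sum (vvec h b i) (Nat.min i dd) (i+1) 1 (le_n 1)).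
  replace (Nat.leb 1 (Nat.min i dd + 1) && Nat.ltb (Nat.min i dd + 1) (1 + (i + 1)))%bool with true.
  2:{ symmetry. apply andb_true_intro. split; [apply Nat.leb_le|apply Nat.ltb_lt]; lia. }
  unfold vvec, cost. replace (Nat.min i dd + 1 - 1)%nat with (Nat.min i dd) by lia.
  destruct (Nat.le_ge_cases i dd).
  - rewrite Nat.min_l by auto. pose proof (le_INR _ _ H).
    rewrite Rmax_right by lra. rewrite Rmax_left by lra. ring.
  - rewrite Nat.min_r by auto. pose proof (le_INR _ _ H).
    rewrite Rmax_left by lra. rewrite Rmax_right by lra. ring.
Qed.

Lemma cost_bounds : forall h b D i dd, 0 < h -> 0 < b -> (i <= D)%nat -> (dd <= D)%nat ->
  0 <= cost h b i dd <= beta D h b.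
Proof.
  intros. unfold cost, beta. pose proof (Rmax_l h b). pose proof (Rmax_r h b).
  pose proof (le_INR _ _ H1). pose proof (le_INR _ _ H2). pose proof (pos_INR i). pose proof (pos_INR dd).
  destruct (Nat.le_ge_cases i dd) as [Hl|Hl]; pose proof (le_INR _ _ Hl).
  - rewrite Rmax_right by lra. rewrite Rmax_left by lra. split; [nra|].
    assert (b * (INR dd - INR i) <= Rmax h b * INR D) by (apply Rmult_le_compat; lra). lra.
  - rewrite Rmax_left by lra. rewrite Rmax_right by lra. split; [nra|].
    assert (h * (INR i - INR dd) <= Rmax h b * INR D) by (apply Rmult_le_compat; lra). lra.
Qed.

Lemma e_bounds : forall h b D i dd, 0 < h -> 0 < b -> (i <= D)%nat -> (dd <= D)%nat ->
  0 <= vSe h b i dd + beta D h b <= 2 * beta D h b.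
Proof.
  intros. rewrite vSe_eq. pose proof (cost_bounds h b D i dd H H0 H1 H2).
  assert (0 <= b * INR dd <= beta D h b).
  { unfold beta. pose proof (Rmax_r h b). pose proof (le_INR _ _ H2). pose proof (pos_INR dd).
    split; [nra|]. rewrite Rmult_comm. apply Rmult_le_compat; lra. }
  lra.
Qed.

Lemma Pge_tail : forall I gamma W i, Pge I gamma W i = tailw I (pprob I gamma W) i.
Proof. intros. unfold Pge, tailw. apply rsum_filter. Qed.

Lemma Pge_pos : forall I gamma W i, I <> [] -> Wpos I W -> 0 < gamma < 1 -> In i I ->
  0 < Pge I gamma W i.
Proof. intros. rewrite Pge_tail. unfold tailw.
  pose proof (rsum_ge_mem (fun j => if Nat.leb i j then pprob I gamma W j else 0) I i) as Hm.
  simpl in Hm. rewrite Nat.leb_refl in Hm. pose proof (pprob_pos I gamma W i H H0 H2 H1).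
  assert (pprob I gamma W i <= rsum (map (fun j => if Nat.leb i j then pprob I gamma W j else 0) I)).
  { apply Hm; auto. intros x Hx. destruct (Nat.leb i x); [left; apply pprob_pos; auto|lra]. }
  lra.
Qed.

Lemma sum_p_ind : forall I gamma W i (g : R),
  rsum (map (fun a => pprob I gamma W a * ((if Nat.leb i a then 1 else 0) / Pge I gamma W i * g)) I)
  = g / Pge I gamma W i * Pge I gamma W i.
Proof. intros. rewrite Pge_tail at 2. unfold tailw. rewrite <- rsum_scal. apply rsum_ext.
  intros a _. destruct (Nat.leb i a); unfold Rdiv; ring. Qed.

Lemma ct_nonneg : forall h b D I gamma W a i dt, I <> [] -> Wpos I W -> 0 < gamma < 1 ->
  0 < h -> 0 < b -> In i I -> (i <= D)%nat -> (dt <= D)%nat ->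
  0 <= ctilde h b D I gamma W a i dt.
Proof. intros. unfold ctilde. pose proof (Pge_pos I gamma W i H H0 H1 H4).
  pose proof (e_bounds h b D i dt H2 H3 H5 H6).
  apply Rmult_le_pos; [|lra]. apply Rmult_le_pos; [destruct (Nat.leb i a); lra|].
  left; apply Rinv_0_lt_compat; auto. Qed.

Lemma sum_p_ct : forall h b D I gamma W i dt, I <> [] -> Wpos I W -> 0 < gamma < 1 -> In i I ->
  rsum (map (fun a => pprob I gamma W a * ctilde h b D I gamma W a i dt) I) = vSe h b i dt + beta D h b.
Proof. intros. unfold ctilde. rewrite sum_p_ind. pose proof (Pge_pos I gamma W i H H0 H1 H2). field. lra. Qed.

Lemma sum_p_ct2 : forall h b D I gamma W i dt, I <> [] -> Wpos I W -> 0 < gamma < 1 -> In i I ->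
  rsum (map (fun a => pprob I gamma W a * (ctilde h b D I gamma W a i dt)^2) I)
  = (vSe h b i dt + beta D h b)^2 / Pge I gamma W i.
Proof. intros. pose proof (Pge_pos I gamma W i H H0 H1 H2).
  rewrite (rsum_ext _ (fun a => pprob I gamma W a * ((if Nat.leb i a then 1 else 0) / Pge I gamma W i *
       ((vSe h b i dt + beta D h b)^2 / Pge I gamma W i)))).
  - rewrite sum_p_ind. field. lra.
  - intros a _. unfold ctilde. destruct (Nat.leb i a); field; lra.
Qed.

Lemma Wnext_pos : forall h b D I eta gamma alpha W a dt, I <> [] -> Wpos I W -> 0 < alpha ->
  Wpos I (Wnext h b D I eta gamma alpha W a dt).
Proof. intros. intros i Hi. unfold Wnext. pose proof (H0 i Hi). pose proof (exp_pos (- eta * ctilde h b D I gamma W a i dt)).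
  pose proof (Wtot_pos I W H H0). pose proof (INR_len_pos I H).
  assert (0 < alpha / INR (length I) * Wtot I W) by (apply Rmult_lt_0_compat; auto; apply Rdiv_lt_0_compat; auto).
  nra. Qed.

Lemma Wtot_next : forall h b D I eta gamma alpha W a dt, I <> [] ->
  Wtot I (Wnext h b D I eta gamma alpha W a dt) =
  rsum (map (fun i => W i * exp (- eta * ctilde h b D I gamma W a i dt)) I) + alpha * Wtot I W.
Proof. intros. unfold Wtot at 1. unfold Wnext. rewrite rsum_plus, rsum_const.
  pose proof (INR_len_pos I H). field. lra. Qed.

Lemma X_bound : forall I gamma W, I <> [] -> NoDup I -> Wpos I W -> 0 < gamma <= 1/2 ->
  rsum (map (fun i => qv I W i / Pge I gamma W i) I) <= 2 * (1 + ln (INR (length I) / gamma)).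
Proof.
  intros I gamma W Hne Hnd Hp Hg.
  assert (Hg' : 0 < gamma < 1) by lra.
  pose proof (INR_len_pos I Hne) as HN.
  assert (Hm : 0 < gamma / INR (length I)) by (apply Rdiv_lt_0_compat; lra).
  pose proof (tele (length I) I (le_n _) Hnd Hne (pprob I gamma W) (gamma / INR (length I)) Hm
     (fun i Hi => pprob_ge I gamma W i Hne Hp Hi Hg')) as HT.
  rewrite sum_p in HT by auto.
  replace (1 / (gamma / INR (length I))) with (INR (length I) / gamma) in HT by (field; lra).
  assert (HB : 0 <= ln (INR (length I) / gamma)).
  { rewrite <- ln_1. apply ln_le'. lra. apply (Rmult_le_reg_r gamma); [lra|].
    unfold Rdiv. rewrite Rmult_assoc, Rinv_l by lra.
    assert (1 <= INR (length I)).
    { destruct I as [|x I']; [congruence|]. simpl length. rewrite S_INR. pose proof (pos_INR (length I')). lra. }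
    lra. }
  apply Rle_trans with (rsum (map (fun i => / (1 - gamma) * (pprob I gamma W i / tailw I (pprob I gamma W) i)) I)).
  - apply rsum_le. intros i Hi. rewrite <- Pge_tail.
    pose proof (Pge_pos I gamma W i Hne Hp Hg' Hi). pose proof (q_nonneg I W i Hne Hp Hi).
    rewrite pprob_eq. unfold Rdiv.
    assert (0 < gamma * / INR (length I)) by (apply Rmult_lt_0_compat; [lra|apply Rinv_0_lt_compat; auto]).
    assert (qv I W i <= / (1 - gamma) * ((1 - gamma) * qv I W i + gamma * / INR (length I))).
    { apply (Rmult_le_reg_l (1 - gamma)); [lra|]. rewrite <- Rmult_assoc, Rinv_r by lra. nra. }
    assert (0 < / Pge I gamma W i) by (apply Rinv_0_lt_compat; auto).
    nra.
  - rewrite rsum_scal.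
    assert (/ (1 - gamma) <= 2).
    { apply (Rmult_le_reg_r (1 - gamma)); [lra|]. rewrite Rinv_l by lra. lra. }
    assert (0 < / (1 - gamma)) by (apply Rinv_0_lt_compat; lra).
    apply Rle_trans with (/ (1 - gamma) * (1 + ln (INR (length I) / gamma))).
    + apply Rmult_le_compat_l; lra.
    + apply Rmult_le_compat_r; lra.
Qed.

Lemma lnZ_step : forall h b D I eta gamma alpha W a dt, I <> [] -> Wpos I W -> 0 < eta -> 0 < gamma < 1 ->
  0 < alpha -> 0 < h -> 0 < b -> (forall i, In i I -> (i <= D)%nat) -> (dt <= D)%nat ->
  ln (Wtot I (Wnext h b D I eta gamma alpha W a dt)) - ln (Wtot I W) <=
  - eta * rsum (map (fun i => qv I W i * ctilde h b D I gamma W a i dt) I)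
  + eta^2/2 * rsum (map (fun i => qv I W i * (ctilde h b D I gamma W a i dt)^2) I) + alpha.
Proof.
  intros h b D I eta gamma alpha W a dt Hne Hp He Hg Ha Hh Hb HD Hdt.
  pose proof (Wtot_pos I W Hne Hp) as HZ.
  pose proof (Wtot_pos I _ Hne (Wnext_pos h b D I eta gamma alpha W a dt Hne Hp Ha)) as HZ'.
  rewrite <- ln_div by auto.
  eapply Rle_trans; [apply ln_le_sub1; apply Rdiv_lt_0_compat; auto|].
  rewrite Wtot_next by auto.
  assert (E1 : (rsum (map (fun i => W i * exp (- eta * ctilde h b D I gamma W a i dt)) I) + alpha * Wtot I W) / Wtot I W
     = rsum (map (fun i => qv I W i * exp (- (eta * ctilde h b D I gamma W a i dt))) I) + alpha).
  { rewrite (rsum_ext (fun i => qv I W i * _) (fun i => / Wtot I W * (W i * exp (- eta * ctilde h b D I gamma W a i dt)))).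
    - rewrite rsum_scal. field. lra.
    - intros. unfold qv. replace (- eta * ctilde h b D I gamma W a x dt) with (- (eta * ctilde h b D I gamma W a x dt)) by ring.
      field. lra. }
  rewrite E1.
  assert (E2 : rsum (map (fun i => qv I W i * exp (- (eta * ctilde h b D I gamma W a i dt))) I) <=
     rsum (map (fun i => qv I W i + (- eta) * (qv I W i * ctilde h b D I gamma W a i dt)
         + eta^2/2 * (qv I W i * (ctilde h b D I gamma W a i dt)^2)) I)).
  { apply rsum_le. intros i Hi. cbv beta.
    pose proof (ct_nonneg h b D I gamma W a i dt Hne Hp Hg Hh Hb Hi (HD i Hi) Hdt).
    pose proof (exp_neg_le (eta * ctilde h b D I gamma W a i dt) ltac:(nra)).
    pose proof (q_nonneg I W i Hne Hp Hi).
    apply Rle_trans with (qv I W i * (1 - eta * ctilde h b D I gamma W a i dt + (eta * ctilde h b D I gamma W a i dt)^2/2)).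
    - apply Rmult_le_compat_l; auto.
    - right. unfold Rdiv. ring. }
  rewrite !rsum_plus, !rsum_scal, sum_q in E2 by auto.
  lra.
Qed.

Lemma lnW_step : forall h b D I eta gamma alpha W a dt u0 u1, I <> [] -> Wpos I W -> 0 < eta -> 0 < gamma < 1 ->
  0 < alpha -> 0 < h -> 0 < b -> (forall i, In i I -> (i <= D)%nat) -> (dt <= D)%nat -> In u0 I -> In u1 I ->
  - ln (Wnext h b D I eta gamma alpha W a dt u1) <=
  - ln (W u0) + eta * ctilde h b D I gamma W a u0 dt
  + (if Nat.eqb u0 u1 then 0 else 1) * ln (INR (length I) / alpha).
Proof.
  intros h b D I eta gamma alpha W a dt u0 u1 Hne Hp He Hg Ha Hh Hb HD Hdt H0 H1.
  pose proof (Wtot_pos I W Hne Hp) as HZ. pose proof (INR_len_pos I Hne) as HN.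
  pose proof (Hp u0 H0). pose proof (ct_nonneg h b D I gamma W a u0 dt Hne Hp Hg Hh Hb H0 (HD u0 H0) Hdt) as Hc.
  pose proof (exp_pos (- eta * ctilde h b D I gamma W a u0 dt)) as Hx.
  assert (Hw : 0 < W u0 * exp (- eta * ctilde h b D I gamma W a u0 dt)) by (apply Rmult_lt_0_compat; auto).
  assert (Hl : ln (W u0 * exp (- eta * ctilde h b D I gamma W a u0 dt)) = ln (W u0) - eta * ctilde h b D I gamma W a u0 dt).
  { rewrite ln_mult, ln_exp by auto. ring. }
  assert (Hna : 0 < alpha / INR (length I)) by (apply Rdiv_lt_0_compat; auto).
  destruct (Nat.eqb_spec u0 u1).
  - subst u1. unfold Wnext.
    assert (ln (W u0 * exp (- eta * ctilde h b D I gamma W a u0 dt)) <=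
      ln (W u0 * exp (- eta * ctilde h b D I gamma W a u0 dt) + alpha / INR (length I) * Wtot I W)).
    { apply ln_le'; auto. assert (0 < alpha / INR (length I) * Wtot I W) by (apply Rmult_lt_0_compat; auto). lra. }
    lra.
  - unfold Wnext. pose proof (Hp u1 H1).
    pose proof (exp_pos (- eta * ctilde h b D I gamma W a u1 dt)).
    assert (ln (alpha / INR (length I) * (W u0 * exp (- eta * ctilde h b D I gamma W a u0 dt))) <=
      ln (W u1 * exp (- eta * ctilde h b D I gamma W a u1 dt) + alpha / INR (length I) * Wtot I W)).
    { apply ln_le'. apply Rmult_lt_0_compat; auto.
      assert (W u0 * exp (- eta * ctilde h b D I gamma W a u0 dt) <= Wtot I W).
      { pose proof (Wtot_ge I W u0 Hp H0).
        assert (exp (- eta * ctilde h b D I gamma W a u0 dt) <= 1).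
        { rewrite <- exp_0. destruct (Req_dec (- eta * ctilde h b D I gamma W a u0 dt) 0) as [E|E].
          rewrite E; lra. left; apply exp_increasing. nra. }
        nra. }
      assert (0 < W u1 * exp (- eta * ctilde h b D I gamma W a u1 dt)) by (apply Rmult_lt_0_compat; auto).
      apply Rle_trans with (alpha / INR (length I) * Wtot I W); [|lra].
      apply Rmult_le_compat_l; lra. }
    rewrite ln_mult in H4 by auto. rewrite Hl in H4.
    replace (ln (alpha / INR (length I))) with (- ln (INR (length I) / alpha)) in H4.
    + lra.
    + replace (INR (length I) / alpha) with (/ (alpha / INR (length I))) by (field; lra).
      rewrite ln_Rinv by auto. ring.
Qed.

Lemma swap_sum : forall I (p q : nat -> R) (g : nat -> nat -> R),
  rsum (map (fun a => p a * rsum (map (fun i => q i * g a i) I)) I) =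
  rsum (map (fun i => q i * rsum (map (fun a => p a * g a i) I)) I).
Proof.
  intros. rewrite (rsum_ext _ (fun a => rsum (map (fun i => p a * (q i * g a i)) I))).
  - rewrite rsum_swap. apply rsum_ext. intros i _. rewrite <- rsum_scal. apply rsum_ext. intros; ring.
  - intros. rewrite <- rsum_scal. reflexivity.
Qed.

Lemma step : forall h b D I eta gamma alpha W dt u0 u1,
  I <> [] -> NoDup I -> Wpos I W -> 0 < eta -> 0 < gamma <= 1/2 -> 0 < alpha -> 0 < h -> 0 < b ->
  (forall i, In i I -> (i <= D)%nat) -> (dt <= D)%nat -> In u0 I -> In u1 I ->
  rsum (map (fun a => pprob I gamma W a * (cost h b a dt - cost h b u0 dt
        + Phi I (Wnext h b D I eta gamma alpha W a dt) u1 / eta)) I)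
  <= Phi I W u0 / eta
     + (gamma * beta D h b + 2 * eta * (beta D h b)^2 * (2 * (1 + ln (INR (length I) / gamma))) + alpha / eta)
     + (if Nat.eqb u0 u1 then 0 else 1) * ln (INR (length I) / alpha) / eta.
Proof.
  intros h b D I eta gamma alpha W dt u0 u1 Hne Hnd Hp He Hg Ha Hh Hb HD Hdt H0 H1.
  assert (Hg' : 0 < gamma < 1) by lra.
  set (p := pprob I gamma W). set (q := qv I W).
  set (ct := fun a i => ctilde h b D I gamma W a i dt).
  set (sw := (if Nat.eqb u0 u1 then 0 else 1) * ln (INR (length I) / alpha)).
  set (bt := beta D h b).
  set (A := fun a => rsum (map (fun i => q i * ct a i) I)).
  set (B := fun a => rsum (map (fun i => q i * (ct a i)^2) I)).
  set (K := - cost h b u0 dt + Phi I W u0 / eta + alpha / eta + sw / eta).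
  assert (Hpt : forall a, In a I ->
     p a * (cost h b a dt - cost h b u0 dt + Phi I (Wnext h b D I eta gamma alpha W a dt) u1 / eta)
     <= p a * cost h b a dt + p a * K + (-1) * (p a * A a) + (eta/2) * (p a * B a) + p a * ct a u0).
  { intros a Ha'.
    pose proof (lnZ_step h b D I eta gamma alpha W a dt Hne Hp He Hg' Ha Hh Hb HD Hdt) as HZ.
    pose proof (lnW_step h b D I eta gamma alpha W a dt u0 u1 Hne Hp He Hg' Ha Hh Hb HD Hdt H0 H1) as HW.
    assert (Phi I (Wnext h b D I eta gamma alpha W a dt) u1 <=
            Phi I W u0 - eta * A a + eta^2/2 * B a + alpha + eta * ct a u0 + sw).
    { unfold Phi, A, B, ct, q, sw in *. cbv beta in *. lra. }
    assert (Phi I (Wnext h b D I eta gamma alpha W a dt) u1 / eta <=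
            Phi I W u0 / eta - A a + eta/2 * B a + alpha/eta + ct a u0 + sw/eta).
    { apply (Rmult_le_reg_r eta); auto. unfold Rdiv.
      replace ((Phi I W u0 * / eta - A a + eta * / 2 * B a + alpha * / eta + ct a u0 + sw * / eta) * eta)
        with (Phi I W u0 - eta * A a + eta^2/2 * B a + alpha + eta * ct a u0 + sw) by (field; lra).
      rewrite Rmult_assoc, Rinv_l by lra. rewrite Rmult_1_r. exact H. }
    pose proof (pprob_pos I gamma W a Hne Hp Ha' Hg') as Hpa. fold p in Hpa.
    apply Rle_trans with (p a * (cost h b a dt + K - A a + eta/2 * B a + ct a u0)).
    - apply Rmult_le_compat_l; [left; exact Hpa|]. unfold K. clearbody p q ct sw bt A B. lra.
    - right. unfold Rdiv. ring. }
  eapply Rle_trans; [apply rsum_le; exact Hpt|].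
  rewrite !rsum_plus, !rsum_scal.
  rewrite (rsum_scal K p I) || idtac.
  fold p.
  assert (Hsp : rsum (map p I) = 1) by (apply sum_p; auto).
  assert (HKp : rsum (map (fun x => p x * K) I) = K).
  { rewrite (rsum_ext _ (fun x => K * p x)) by (intros; ring). rewrite rsum_scal, Hsp. ring. }
  rewrite HKp.
  assert (HA : rsum (map (fun x => p x * A x) I) = rsum (map (fun i => q i * (vSe h b i dt + bt)) I)).
  { unfold A. rewrite swap_sum. apply rsum_ext. intros i Hi. unfold p, ct. rewrite sum_p_ct; auto. }
  assert (HB : rsum (map (fun x => p x * B x) I) = rsum (map (fun i => q i * ((vSe h b i dt + bt)^2 / Pge I gamma W i)) I)).
  { unfold B. rewrite swap_sum. apply rsum_ext. intros i Hi. unfold p, ct. rewrite sum_p_ct2; auto. }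
  assert (HC : rsum (map (fun x => p x * ct x u0) I) = vSe h b u0 dt + bt).
  { unfold p, ct. apply sum_p_ct; auto. }
  rewrite HA, HB, HC.
  assert (HqE : rsum (map (fun i => q i * (vSe h b i dt + bt)) I) =
                rsum (map (fun i => q i * cost h b i dt) I) + (bt - b * INR dt)).
  { rewrite (rsum_ext _ (fun i => q i * cost h b i dt + (bt - b * INR dt) * q i)).
    - rewrite rsum_plus, rsum_scal. unfold q. rewrite sum_q by auto. ring.
    - intros. rewrite vSe_eq. ring. }
  rewrite HqE. rewrite (vSe_eq h b u0 dt).
  assert (HS1 : rsum (map (fun x => p x * cost h b x dt) I) <= rsum (map (fun i => q i * cost h b i dt) I) + gamma * bt).
  { unfold p. rewrite (rsum_ext _ (fun x => (1 - gamma) * (q x * cost h b x dt) + gamma / INR (length I) * cost h b x dt)).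
    2:{ intros. rewrite pprob_eq. fold q. ring. }
    rewrite rsum_plus, !rsum_scal.
    assert (0 <= rsum (map (fun x => q x * cost h b x dt) I)).
    { apply rsum_nonneg. intros. pose proof (cost_bounds h b D x dt Hh Hb (HD x H) Hdt).
      pose proof (q_nonneg I W x Hne Hp H). unfold q. nra. }
    assert (rsum (map (fun x => cost h b x dt) I) <= INR (length I) * bt).
    { rewrite <- rsum_const. apply rsum_le. intros. apply (cost_bounds h b D x dt Hh Hb (HD x H2) Hdt). }
    pose proof (INR_len_pos I Hne).
    assert (gamma / INR (length I) * rsum (map (fun x => cost h b x dt) I) <= gamma * bt).
    { apply Rle_trans with (gamma / INR (length I) * (INR (length I) * bt)).
      apply Rmult_le_compat_l; auto. left; apply Rdiv_lt_0_compat; lra. right; field; lra. }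
    nra. }
  assert (HS3 : rsum (map (fun i => q i * ((vSe h b i dt + bt)^2 / Pge I gamma W i)) I)
               <= 4 * bt^2 * (2 * (1 + ln (INR (length I) / gamma)))).
  { pose proof (X_bound I gamma W Hne Hnd Hp Hg).
    apply Rle_trans with (4 * bt^2 * rsum (map (fun i => qv I W i / Pge I gamma W i) I)).
    - rewrite <- rsum_scal. apply rsum_le. intros i Hi.
      pose proof (e_bounds h b D i dt Hh Hb (HD i Hi) Hdt) as He2. fold bt in He2.
      pose proof (Pge_pos I gamma W i Hne Hp Hg' Hi). pose proof (q_nonneg I W i Hne Hp Hi).
      unfold q. unfold Rdiv.
      assert (0 < / Pge I gamma W i) by (apply Rinv_0_lt_compat; auto).
      assert ((vSe h b i dt + bt) ^ 2 <= 4 * bt^2) by nra.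
      assert (0 <= qv I W i * / Pge I gamma W i) by nra.
      nra.
    - apply Rmult_le_compat_l; auto. pose proof (pow2_ge_0 bt). lra. }
  assert (HS3' : eta / 2 * rsum (map (fun i => q i * ((vSe h b i dt + bt)^2 / Pge I gamma W i)) I)
               <= 2 * eta * bt^2 * (2 * (1 + ln (INR (length I) / gamma)))).
  { apply Rle_trans with (eta / 2 * (4 * bt^2 * (2 * (1 + ln (INR (length I) / gamma))))).
    apply Rmult_le_compat_l; [lra|exact HS3]. right; field. }
  unfold K. unfold Rdiv in *. clearbody p q ct sw bt A B K. lra.
Qed.

Definition Ex h b D I eta gamma alpha d t W n (f : list nat -> R) :=
  rsum (map (fun s => seq_prob h b D I eta gamma alpha d t W s * f s) (all_seqs I n)).

Lemma Ex_S : forall h b D I eta gamma alpha d t W n f,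
  Ex h b D I eta gamma alpha d t W (S n) f =
  rsum (map (fun a => pprob I gamma W a *
     Ex h b D I eta gamma alpha d (S t) (Wnext h b D I eta gamma alpha W a (d t)) n (fun r => f (a :: r))) I).
Proof. intros. unfold Ex. simpl all_seqs. rewrite rsum_flat_map. apply rsum_ext. intros a _.
  rewrite map_map. rewrite <- rsum_scal. apply rsum_ext. intros. simpl seq_prob. ring. Qed.

Lemma Ex_0 : forall h b D I eta gamma alpha d t W f, Ex h b D I eta gamma alpha d t W 0 f = f [].
Proof. intros. unfold Ex. simpl. unfold rsum. simpl. ring. Qed.

Lemma Ex_ext : forall h b D I eta gamma alpha d t W n f g, (forall s, f s = g s) ->
  Ex h b D I eta gamma alpha d t W n f = Ex h b D I eta gamma alpha d t W n g.
Proof. intros. unfold Ex. apply rsum_ext. intros. rewrite H. auto. Qed.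

Lemma Ex_plus : forall h b D I eta gamma alpha d t W n f g,
  Ex h b D I eta gamma alpha d t W n (fun s => f s + g s) =
  Ex h b D I eta gamma alpha d t W n f + Ex h b D I eta gamma alpha d t W n g.
Proof. intros. unfold Ex. rewrite <- rsum_plus. apply rsum_ext. intros. ring. Qed.

Lemma Ex_mass : forall h b D I eta gamma alpha d n t W c, I <> [] -> Wpos I W -> 0 < alpha ->
  Ex h b D I eta gamma alpha d t W n (fun _ => c) = c.
Proof. induction n; intros t W c Hne Hp Ha.
  - rewrite Ex_0. auto.
  - rewrite Ex_S. rewrite (rsum_ext _ (fun a => c * pprob I gamma W a)).
    + rewrite rsum_scal, sum_p by auto. ring.
    + intros a Ha'. rewrite IHn; auto. ring. apply Wnext_pos; auto.
Qed.

Lemma Phi_nonneg : forall I W u, I <> [] -> Wpos I W -> In u I -> 0 <= Phi I W u.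
Proof. intros. unfold Phi. pose proof (Wtot_ge I W u H0 H1). pose proof (H0 u H1).
  pose proof (ln_le' _ _ H3 H2). lra. Qed.

Lemma main_ind : forall h b D I eta gamma alpha d, I <> [] -> NoDup I -> 0 < eta -> 0 < gamma <= 1/2 ->
  0 < alpha -> 0 < h -> 0 < b -> (forall i, In i I -> (i <= D)%nat) ->
  let kappa := gamma * beta D h b + 2 * eta * (beta D h b)^2 * (2 * (1 + ln (INR (length I) / gamma))) + alpha / eta in
  forall rest u0 t W, Wpos I W -> In u0 I -> (forall x, In x rest -> In x I) ->
  (forall k, (t <= k <= t + length rest)%nat -> (d k <= D)%nat) ->
  Ex h b D I eta gamma alpha d t W (S (length rest)) (fun s => path_cost h b d t s - path_cost h b d t (u0 :: rest))
  <= Phi I W u0 / eta + INR (S (length rest)) * kappa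
     + (INR (complexity (u0 :: rest)) - 1) * ln (INR (length I) / alpha) / eta.
Proof.
  intros h b D I eta gamma alpha d Hne Hnd He Hg Ha Hh Hb HD kappa.
  assert (Hg' : 0 < gamma < 1) by lra.
  induction rest as [|u1 r IH]; intros u0 t W Hp H0 Hr Hd.
  - rewrite Ex_S. simpl length. simpl complexity.
    pose proof (step h b D I eta gamma alpha W (d t) u0 u0 Hne Hnd Hp He Hg Ha Hh Hb HD
       (Hd t ltac:(simpl; lia)) H0 H0) as Hs.
    rewrite Nat.eqb_refl in Hs.
    eapply Rle_trans; [|eapply Rle_trans; [exact Hs|]].
    + apply rsum_le. intros a Ha'. rewrite Ex_0. simpl path_cost.
      pose proof (Phi_nonneg I (Wnext h b D I eta gamma alpha W a (d t)) u0 Hne (Wnext_pos _ _ _ _ _ _ _ _ _ _ Hne Hp Ha) H0).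
      pose proof (pprob_pos I gamma W a Hne Hp Ha' Hg').
      apply Rmult_le_compat_l; [lra|].
      assert (0 <= Phi I (Wnext h b D I eta gamma alpha W a (d t)) u0 / eta) by (unfold Rdiv; apply Rmult_le_pos; [lra | left; apply Rinv_0_lt_compat; lra]).
      lra.
    + unfold kappa. simpl INR. lra.
  - rewrite Ex_S.
    assert (HI1 : In u1 I) by (apply Hr; left; auto).
    pose proof (step h b D I eta gamma alpha W (d t) u0 u1 Hne Hnd Hp He Hg Ha Hh Hb HD
       (Hd t ltac:(simpl; lia)) H0 HI1) as Hs.
    set (L := ln (INR (length I) / alpha)) in *.
    set (C1 := INR (S (length r)) * kappa + (INR (complexity (u1 :: r)) - 1) * L / eta).
    eapply Rle_trans.
    + apply rsum_le with (g := fun a => pprob I gamma W a * (cost h b a (d t) - cost h b u0 (d t)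
        + Phi I (Wnext h b D I eta gamma alpha W a (d t)) u1 / eta) + C1 * pprob I gamma W a).
      intros a Ha'.
      rewrite (Ex_ext _ _ _ _ _ _ _ _ _ _ _ _ (fun s => (cost h b a (d t) - cost h b u0 (d t)) +
           (path_cost h b d (S t) s - path_cost h b d (S t) (u1 :: r)))).
      2:{ intros s. simpl path_cost. ring. }
      rewrite Ex_plus, Ex_mass by (auto; apply Wnext_pos; auto).
      assert (Hr' : forall x, In x r -> In x I) by (intros; apply Hr; right; auto).
      pose proof (IH u1 (S t) (Wnext h b D I eta gamma alpha W a (d t))
          (Wnext_pos _ _ _ _ _ _ _ _ _ _ Hne Hp Ha) HI1 Hr'
          ltac:(intros k Hk; apply Hd; simpl; lia)) as IHa.
      fold L in IHa. fold C1 in IHa.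
      pose proof (pprob_pos I gamma W a Hne Hp Ha' Hg').
      assert (pprob I gamma W a * (cost h b a (d t) - cost h b u0 (d t) +
          Ex h b D I eta gamma alpha d (S t) (Wnext h b D I eta gamma alpha W a (d t)) (S (length r))
            (fun s => path_cost h b d (S t) s - path_cost h b d (S t) (u1 :: r)))
        <= pprob I gamma W a * (cost h b a (d t) - cost h b u0 (d t) +
           (Phi I (Wnext h b D I eta gamma alpha W a (d t)) u1 / eta + C1))).
      { apply Rmult_le_compat_l; [lra|]. unfold C1 in *. lra. }
      eapply Rle_trans; [exact H1|]. right; ring.
    + rewrite rsum_plus, rsum_scal, sum_p by auto.
      unfold C1. change (length (u1::r)) with (S (length r)).
      change (complexity (u0::u1::r)) with ((if Nat.eqb u0 u1 then 0 else 1) + complexity (u1 :: r))%nat.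
      rewrite plus_INR. rewrite (S_INR (S (length r))).
      unfold kappa in *. 
      destruct (Nat.eqb u0 u1); [change (INR 0) with 0|change (INR 1) with 1]; unfold Rdiv in *; lra.
Qed.

Lemma all_seqs_prop : forall I n s, In s (all_seqs I n) -> length s = n /\ (forall x, In x s -> In x I).
Proof. induction n; intros s Hs; simpl in Hs.
  - destruct Hs as [<-|[]]. split; auto. intros x [].
  - apply in_flat_map in Hs. destruct Hs as [a [Ha Hs]]. apply in_map_iff in Hs.
    destruct Hs as [r [<- Hr]]. destruct (IHn r Hr). split; simpl; auto.
    intros x [<-|Hx]; auto.
Qed.

Lemma repeat_in : forall I n i, In i I -> In (repeat i n) (all_seqs I n).
Proof. induction n; intros; simpl; auto. apply in_flat_map. exists i. split; auto.
  apply in_map. auto. Qed.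

Lemma complexity_repeat : forall i n, (complexity (repeat i n) <= 1)%nat.
Proof. induction n; simpl; auto. destruct n; simpl in *; auto. rewrite Nat.eqb_refl. simpl. auto. Qed.

Lemma fold_min_in : forall r x, In (fold_right Rmin x r) (x :: r).
Proof. induction r; intros x. left; reflexivity.
  change (fold_right Rmin x (a :: r)) with (Rmin a (fold_right Rmin x r)).
  destruct (Rle_dec a (fold_right Rmin x r)).
  - rewrite Rmin_left by auto. right; left; reflexivity.
  - rewrite Rmin_right by lra. destruct (IHr x) as [E|E]; [left; exact E|right; right; exact E]. Qed.

Lemma list_min_in : forall l, l <> [] -> In (list_min l) l.
Proof. intros [|x r] H; [congruence|]. apply fold_min_in. Qed.

Lemma bench_attained : forall h b I d T S, I <> [] -> (1 <= S)%nat ->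
  exists u, In u (all_seqs I T) /\ (complexity u <= S)%nat /\ benchmark h b I d T S = path_cost h b d 1 u.
Proof.
  intros. unfold benchmark.
  set (l := filter (fun s => Nat.leb (complexity s) S) (all_seqs I T)).
  assert (Hl : l <> []).
  { destruct I as [|i I']; [congruence|].
    assert (In (repeat i T) l).
    { unfold l. apply filter_In. split. apply repeat_in; left; auto.
      apply Nat.leb_le. pose proof (complexity_repeat i T). lia. }
    destruct l; [destruct H1|discriminate]. }
  assert (map (path_cost h b d 1) l <> []) by (destruct l; [congruence|discriminate]).
  pose proof (list_min_in _ H1). apply in_map_iff in H2. destruct H2 as [u [E Hu]].
  exists u. unfold l in Hu. apply filter_In in Hu. destruct Hu as [Hu Hc].
  apply Nat.leb_le in Hc. auto.
Qed.

Lemma path_cost_bounds : forall h b D I d s t, 0 < h -> 0 < b -> (forall i, In i I -> (i <= D)%nat) ->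
  (forall x, In x s -> In x I) -> (forall k, (t <= k < t + length s)%nat -> (d k <= D)%nat) ->
  0 <= path_cost h b d t s <= INR (length s) * beta D h b.
Proof. induction s; intros t Hh Hb HD Hs Hd; simpl path_cost.
  - simpl. lra.
  - pose proof (cost_bounds h b D a (d t) Hh Hb (HD a (Hs a (or_introl eq_refl))) (Hd t ltac:(simpl; lia))).
    pose proof (IHs (S t) Hh Hb HD (fun x Hx => Hs x (or_intror Hx)) ltac:(intros k Hk; apply Hd; simpl; lia)).
    simpl length. rewrite S_INR. lra.
Qed.

Lemma Ex_le : forall h b D I eta gamma alpha d n t W f g, I <> [] -> Wpos I W -> 0 < gamma < 1 -> 0 < alpha ->
  (forall s, length s = n -> (forall x, In x s -> In x I) -> f s <= g s) ->
  Ex h b D I eta gamma alpha d t W n f <= Ex h b D I eta gamma alpha d t W n g.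
Proof. induction n; intros t W f g Hne Hp Hg Ha H.
  - rewrite !Ex_0. apply H; auto. intros x [].
  - rewrite !Ex_S. apply rsum_le. intros a Ha'. apply Rmult_le_compat_l.
    + left; apply pprob_pos; auto.
    + apply IHn; auto. apply Wnext_pos; auto. intros s Hs Hx. apply H. simpl; auto.
      intros x [<-|Hx']; auto.
Qed.

Lemma regret_Ex : forall h b D I eta gamma alpha d T S,
  FSF_expected_regret h b D I eta gamma alpha d T S =
  Ex h b D I eta gamma alpha d 1 (fun _ => 1) T (fun s => path_cost h b d 1 s - benchmark h b I d T S).
Proof. reflexivity. Qed.

Lemma trivial_bound : forall h b D I eta gamma alpha d T S, I <> [] -> 0 < gamma < 1 -> 0 < alpha ->
  0 < h -> 0 < b -> (forall i, In i I -> (i <= D)%nat) -> (1 <= S)%nat ->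
  (forall t, (1 <= t <= T)%nat -> (d t <= D)%nat) ->
  FSF_expected_regret h b D I eta gamma alpha d T S <= INR T * beta D h b.
Proof.
  intros. rewrite regret_Ex. destruct (bench_attained h b I d T S H H5) as [u [Hu [Hc Hb']]].
  rewrite Hb'. destruct (all_seqs_prop I T u Hu) as [Hlu Hxu].
  assert (Hp1 : Wpos I (fun _ => 1)) by (intros i _; lra).
  rewrite <- (Ex_mass h b D I eta gamma alpha d T 1 (fun _ => 1) (INR T * beta D h b)) by auto.
  apply Ex_le; auto. intros s Hs Hx.
  pose proof (path_cost_bounds h b D I d s 1 H2 H3 H4 Hx ltac:(intros k Hk; apply H6; lia)).
  pose proof (path_cost_bounds h b D I d u 1 H2 H3 H4 Hxu ltac:(intros k Hk; apply H6; lia)).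
  rewrite Hs in H7. lra.
Qed.

Lemma generic_bound : forall h b D I eta gamma alpha d T S, I <> [] -> NoDup I -> 0 < eta -> 0 < gamma <= 1/2 ->
  0 < alpha -> 0 < h -> 0 < b -> (forall i, In i I -> (i <= D)%nat) -> (1 <= S)%nat -> (1 <= T)%nat ->
  (forall t, (1 <= t <= T)%nat -> (d t <= D)%nat) -> 0 <= ln (INR (length I) / alpha) ->
  FSF_expected_regret h b D I eta gamma alpha d T S <=
  ln (INR (length I)) / eta
  + INR T * (gamma * beta D h b + 2 * eta * (beta D h b)^2 * (2 * (1 + ln (INR (length I) / gamma))) + alpha / eta)
  + (INR S - 1) * ln (INR (length I) / alpha) / eta.
Proof.
  intros. rewrite regret_Ex. destruct (bench_attained h b I d T S H H7) as [u [Hu [Hc Hb']]].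
  rewrite Hb'. destruct (all_seqs_prop I T u Hu) as [Hlu Hxu].
  destruct u as [|u0 rest]; [simpl in Hlu; lia|].
  assert (Hp1 : Wpos I (fun _ => 1)) by (intros i _; lra).
  pose proof (main_ind h b D I eta gamma alpha d H H0 H1 H2 H3 H4 H5 H6 rest u0 1 (fun _ => 1) Hp1
     (Hxu u0 (or_introl eq_refl)) (fun x Hx => Hxu x (or_intror Hx))
     ltac:(intros k Hk; apply H9; simpl in Hlu; lia)) as HM.
  replace T with (Datatypes.S (length rest)) by (rewrite <- Hlu; reflexivity).
  unfold Phi in HM. rewrite ln_1 in HM.
  assert (HW : Wtot I (fun _ => 1) = INR (length I)) by (unfold Wtot; rewrite rsum_const; ring).
  rewrite HW in HM.
  eapply Rle_trans; [exact HM|].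
  assert (INR (complexity (u0 :: rest)) <= INR S) by (apply le_INR; auto).
  assert (0 < / eta) by (apply Rinv_0_lt_compat; auto).
  assert ((INR (complexity (u0 :: rest)) - 1) * ln (INR (length I) / alpha) * / eta <=
          (INR S - 1) * ln (INR (length I) / alpha) * / eta).
  { apply Rmult_le_compat_r; [lra|]. apply Rmult_le_compat_r; lra. }
  unfold Rdiv in *. lra.
Qed.

Lemma sqrt_pair : forall P Q, 0 < P -> 0 < Q ->
  P / sqrt (P / Q) = sqrt (P * Q) /\ sqrt (P / Q) * Q = sqrt (P * Q).
Proof.
  intros P Q HP HQ. assert (Hs : 0 < sqrt (P / Q)) by (apply sqrt_lt_R0; apply Rdiv_lt_0_compat; auto).
  assert (E : sqrt (P * Q) = sqrt (P / Q) * Q).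
  { replace (P * Q) with (P / Q * (Q * Q)) by (field; lra). rewrite sqrt_mult.
    rewrite sqrt_square; lra. left; apply Rdiv_lt_0_compat; auto. nra. }
  assert (E2 : sqrt (P / Q) * sqrt (P / Q) = P / Q) by (apply sqrt_sqrt; left; apply Rdiv_lt_0_compat; auto).
  split; [|lra]. rewrite E. apply (Rmult_eq_reg_r (sqrt (P / Q))); [|lra].
  unfold Rdiv at 1. rewrite Rmult_assoc, Rinv_l by lra.
  replace (sqrt (P / Q) * Q * sqrt (P / Q)) with (sqrt (P / Q) * sqrt (P / Q) * Q) by ring.
  rewrite E2. field. lra.
Qed.

Lemma sqrt_half : forall y, 1/4 <= y -> 1/2 <= sqrt y.
Proof. intros. replace (1/2) with (sqrt ((1/2)*(1/2))) by (rewrite sqrt_square; lra).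
  apply sqrt_le_1_alt. lra. Qed.

Lemma sqrt_2bt : forall bt Z, 0 < bt -> 0 <= Z -> sqrt (Z * (4 * bt^2)) = 2 * bt * sqrt Z.
Proof. intros. replace (Z * (4 * bt^2)) with ((2*bt)*(2*bt) * Z) by ring.
  rewrite sqrt_mult, sqrt_square; try lra; nra. Qed.

Lemma reduce : forall A N Tr bt Sr eta, 2 <= N -> 3 <= Tr -> 1 <= bt * Tr -> 1 <= Sr -> 0 < eta -> 0 < bt ->
  A <= ln N / eta + Tr * (1 / (2 * bt * Tr) * bt + 2 * eta * bt^2 * (2 * (1 + ln (N / (1 / (2 * bt * Tr)))))
         + 1 / Tr / eta) + (Sr - 1) * ln (N / (1 / Tr)) / eta ->
  A <= 1/2 + Sr * ln (N * Tr) / eta + eta * (4 * bt^2 * Tr * ln (2 * bt * Tr * N^3 + N + 2)).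
Proof.
  intros A N Tr bt Sr eta HN HT HbT HS He Hb H.
  replace (N / (1 / (2 * bt * Tr))) with (2 * bt * Tr * N) in H by (field; lra).
  replace (N / (1 / Tr)) with (N * Tr) in H by (field; lra).
  set (x := ln (N * Tr)) in *.
  assert (H1 : 1 + ln (2 * bt * Tr * N) <= ln (2 * bt * Tr * N^3 + N + 2)).
  { assert (Hp : 0 < 2 * bt * Tr * N) by (repeat apply Rmult_lt_0_compat; lra).
    pose proof (exp_pos 1).
    rewrite <- (ln_exp 1) at 1. rewrite <- ln_mult by lra.
    apply ln_le'. apply Rmult_lt_0_compat; lra.
    pose proof exp_le_3.
    assert (exp 1 * (2 * bt * Tr * N) <= 4 * (2 * bt * Tr * N)) by (apply Rmult_le_compat_r; lra).
    assert (4 <= N^2) by nra.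
    assert (4 * (2 * bt * Tr * N) <= 2 * bt * Tr * N ^ 3).
    { replace (2 * bt * Tr * N ^ 3) with (N^2 * (2 * bt * Tr * N)) by ring. apply Rmult_le_compat_r; lra. }
    lra. }
  assert (H2 : ln N + 1 <= x).
  { unfold x. rewrite ln_mult by lra. assert (1 <= ln Tr).
    { rewrite <- (ln_exp 1). apply ln_le'. apply exp_pos. pose proof exp_le_3. lra. }
    lra. }
  set (L := ln (2 * bt * Tr * N ^ 3 + N + 2)) in *.
  assert (E1 : Tr * (1 / (2 * bt * Tr) * bt) = 1/2) by (field; lra).
  assert (E2 : Tr * (1 / Tr / eta) = 1 / eta) by (field; lra).
  assert (H3 : Tr * (2 * eta * bt ^ 2 * (2 * (1 + ln (2 * bt * Tr * N)))) <= eta * (4 * bt ^ 2 * Tr * L)).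
  { replace (eta * (4 * bt ^ 2 * Tr * L)) with (Tr * (2 * eta * bt ^ 2 * (2 * L))) by ring.
    apply Rmult_le_compat_l; [lra|]. apply Rmult_le_compat_l; [|lra].
    assert (0 < bt^2) by nra. nra. }
  assert (Hie : 0 < / eta) by (apply Rinv_0_lt_compat; auto).
  assert (H4 : (ln N + 1) * / eta <= x * / eta) by (apply Rmult_le_compat_r; lra).
  assert (H5 : A <= ln N / eta + 1 / 2 + Tr * (2 * eta * bt ^ 2 * (2 * (1 + ln (2 * bt * Tr * N))))
      + 1 / eta + (Sr - 1) * x / eta).
  { eapply Rle_trans; [exact H|]. rewrite <- E1, <- E2. right. ring. }
  unfold Rdiv in *.
  clearbody x L. nra.
Qed.

Theorem theorem2 :
  forall (T D : nat) (h b : R) (I : list nat) (S : nat),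
    (1 <= T)%nat -> (1 <= D)%nat -> 0 < h -> 0 < b ->
    NoDup I -> (forall i, In i I -> (i <= D)%nat) ->
    (2 <= length I)%nat ->
    2 * beta D h b * INR T > 1 ->
    (1 <= S)%nat ->
    let N := INR (length I) in
    let bt := beta D h b in
    let L := ln (2 * bt * INR T * N ^ 3 + N + 2) in
    forall d : nat -> nat,
      (forall t, (1 <= t <= T)%nat -> (d t <= D)%nat) ->
      (* (a) *)
      FSF_expected_regret h b D I
        (sqrt (ln (N * INR T) / (4 * bt ^ 2 * INR T * L)))
        (1 / (2 * bt * INR T)) (1 / INR T) d T S
      <= 2 * (INR S + 1) * bt * sqrt (INR T * ln (N * INR T) * L)
         + 2 * bt * sqrt (INR T * ln N) + 2
      /\
      (* (b) *)
      FSF_expected_regret h b D I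
        (sqrt (INR S * ln (N * INR T) / (4 * bt ^ 2 * INR T * L)))
        (1 / (2 * bt * INR T)) (1 / INR T) d T S
      <= 4 * bt * sqrt (INR S * INR T * ln (N * INR T) * L)
         + 2 * bt * sqrt (INR T * ln N) + 2.
Proof.
  intros T D h b I S HT HD Hh Hb Hnd HID HN H2bT HS N bt L d Hd. fold bt in H2bT.
  assert (Hne : I <> []) by (destruct I; simpl in HN; [lia|discriminate]).
  assert (HN2 : 2 <= N) by (unfold N; apply le_INR in HN; simpl in HN; lra).
  assert (HT1 : 1 <= INR T) by (apply le_INR in HT; simpl in HT; lra).
  assert (HS1 : 1 <= INR S) by (apply le_INR in HS; simpl in HS; lra).
  assert (Hbt : 0 < bt).
  { unfold bt, beta. apply le_INR in HD. simpl in HD. pose proof (Rmax_l h b). nra. }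
  assert (Hx : / 2 < ln (N * INR T)).
  { pose proof ln_lt_2. assert (ln 2 <= ln (N * INR T)) by (apply ln_le'; nra). lra. }
  assert (HL : / 2 < L).
  { pose proof ln_lt_2. unfold L. assert (ln 2 <= ln (2 * bt * INR T * N ^ 3 + N + 2)).
    { apply ln_le'. lra. assert (0 <= 2 * bt * INR T * N ^ 3).
      { pose proof (pow_le N 3 ltac:(lra)). assert (0 <= 2 * bt * INR T) by nra.
        apply Rmult_le_pos; lra. }
      lra. }
    lra. }
  assert (HlnN : 0 <= ln N) by (rewrite <- ln_1; apply ln_le'; lra).
  assert (Hs1 : 0 <= sqrt (INR T * ln N)) by apply sqrt_pos.
  set (x := ln (N * INR T)) in *.
  set (Tr := INR T) in *.
  assert (Hgam : 0 < 1 / (2 * bt * Tr) < 1).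
  { split. apply Rdiv_lt_0_compat; lra. apply (Rmult_lt_reg_r (2 * bt * Tr)); [lra|].
    unfold Rdiv. rewrite Rmult_assoc, Rinv_l by lra. lra. }
  assert (Hal : 0 < 1 / Tr) by (apply Rdiv_lt_0_compat; lra).
  destruct (Compare_dec.le_lt_dec T 2) as [HT2|HT3]; [|destruct (Rlt_le_dec (bt * Tr) 1) as [Hsm|Hbg]].
  -
    assert (HTr2 : Tr <= 2) by (unfold Tr; apply le_INR in HT2; simpl in HT2; lra).
    assert (HxL : 1/4 <= x * L) by nra.
    assert (HTxL : 1/4 <= Tr * x * L).
    { replace (Tr * x * L) with (Tr * (x * L)) by ring. nra. }
    assert (Hq1 : 1/2 <= sqrt (Tr * x * L)) by (apply sqrt_half; lra).
    assert (Hq2 : 1/2 <= sqrt (INR S * Tr * x * L)).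
    { apply sqrt_half. replace (INR S * Tr * x * L) with (INR S * (Tr * x * L)) by ring. nra. }
    assert (A1 : bt * (1/2) <= bt * sqrt (Tr * x * L)) by (apply Rmult_le_compat_l; lra).
    assert (A1' : bt * (1/2) <= bt * sqrt (INR S * Tr * x * L)) by (apply Rmult_le_compat_l; lra).
    assert (A2 : 2 * (bt * sqrt (Tr * x * L)) <= (INR S + 1) * (bt * sqrt (Tr * x * L))).
    { apply Rmult_le_compat_r; lra. }
    assert (A3 : 0 <= bt * sqrt (Tr * ln N)) by (apply Rmult_le_pos; lra).
    assert (A4 : Tr * bt <= 2 * bt) by nra.
    split; (eapply Rle_trans; [apply trivial_bound; auto|]); fold bt Tr.
    + replace (2 * (INR S + 1) * bt * sqrt (Tr * x * L)) with (2 * ((INR S + 1) * (bt * sqrt (Tr * x * L)))) by ring.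
      replace (2 * bt * sqrt (Tr * ln N)) with (2 * (bt * sqrt (Tr * ln N))) by ring. lra.
    + replace (4 * bt * sqrt (INR S * Tr * x * L)) with (4 * (bt * sqrt (INR S * Tr * x * L))) by ring.
      replace (2 * bt * sqrt (Tr * ln N)) with (2 * (bt * sqrt (Tr * ln N))) by ring. lra.
  -
    assert (0 <= bt * sqrt (Tr * x * L)) by (apply Rmult_le_pos; [lra|apply sqrt_pos]).
    assert (0 <= bt * sqrt (INR S * Tr * x * L)) by (apply Rmult_le_pos; [lra|apply sqrt_pos]).
    assert (A3 : 0 <= bt * sqrt (Tr * ln N)) by (apply Rmult_le_pos; lra).
    assert (0 <= (INR S + 1) * (bt * sqrt (Tr * x * L))) by (apply Rmult_le_pos; lra).
    split; (eapply Rle_trans; [apply trivial_bound; auto|]); fold bt Tr.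
    + replace (2 * (INR S + 1) * bt * sqrt (Tr * x * L)) with (2 * ((INR S + 1) * (bt * sqrt (Tr * x * L)))) by ring.
      replace (2 * bt * sqrt (Tr * ln N)) with (2 * (bt * sqrt (Tr * ln N))) by ring. lra.
    + replace (4 * bt * sqrt (INR S * Tr * x * L)) with (4 * (bt * sqrt (INR S * Tr * x * L))) by ring.
      replace (2 * bt * sqrt (Tr * ln N)) with (2 * (bt * sqrt (Tr * ln N))) by ring. lra.
  -
    assert (HTr3 : 3 <= Tr) by (unfold Tr; apply le_INR in HT3; simpl in HT3; lra).
    assert (Hgam' : 0 < 1 / (2 * bt * Tr) <= 1/2).
    { split; [lra|]. apply (Rmult_le_reg_r (2 * bt * Tr)); [lra|].
      unfold Rdiv. rewrite Rmult_assoc, Rinv_l by lra. lra. }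
    assert (Hla : 0 <= ln (N / (1 / Tr))).
    { replace (N / (1 / Tr)) with (N * Tr) by (field; lra). fold x. lra. }
    assert (HQ : 0 < 4 * bt ^ 2 * Tr * L).
    { apply Rmult_lt_0_compat; [apply Rmult_lt_0_compat; [apply Rmult_lt_0_compat; [lra| apply pow_lt; lra] | lra] | lra]. }
    split.
    + set (eta := sqrt (x / (4 * bt ^ 2 * Tr * L))).
      assert (He : 0 < eta) by (apply sqrt_lt_R0; apply Rdiv_lt_0_compat; lra).
      pose proof (generic_bound h b D I eta (1 / (2 * bt * Tr)) (1 / Tr) d T S Hne Hnd He Hgam' Hal Hh Hb HID HS HT Hd Hla) as G.
      fold N bt Tr in G.
      pose proof (reduce _ N Tr bt (INR S) eta HN2 HTr3 Hbg HS1 He Hbt G) as R.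
      fold x L in R.
      destruct (sqrt_pair x (4 * bt ^ 2 * Tr * L) ltac:(lra) HQ) as [E1 E2]. fold eta in E1, E2.
      replace (x * (4 * bt ^ 2 * Tr * L)) with ((Tr * x * L) * (4 * bt^2)) in E1, E2 by ring.
      rewrite sqrt_2bt in E1, E2 by nra.
      replace (INR S * x / eta) with (INR S * (x / eta)) in R by (unfold Rdiv; ring).
      rewrite E1, E2 in R.
      replace (2 * (INR S + 1) * bt * sqrt (Tr * x * L)) with (1 * (INR S * (2 * bt * sqrt (Tr * x * L))) + 2 * bt * sqrt (Tr * x * L)) by ring.
      assert (0 <= 2 * bt * sqrt (Tr * ln N)) by (apply Rmult_le_pos; lra).
      lra.
    + set (eta := sqrt (INR S * x / (4 * bt ^ 2 * Tr * L))).
      assert (He : 0 < eta) by (apply sqrt_lt_R0; apply Rdiv_lt_0_compat; nra).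
      pose proof (generic_bound h b D I eta (1 / (2 * bt * Tr)) (1 / Tr) d T S Hne Hnd He Hgam' Hal Hh Hb HID HS HT Hd Hla) as G.
      fold N bt Tr in G.
      pose proof (reduce _ N Tr bt (INR S) eta HN2 HTr3 Hbg HS1 He Hbt G) as R.
      fold x L in R.
      destruct (sqrt_pair (INR S * x) (4 * bt ^ 2 * Tr * L) ltac:(nra) HQ) as [E1 E2]. fold eta in E1, E2.
      replace (INR S * x * (4 * bt ^ 2 * Tr * L)) with ((INR S * Tr * x * L) * (4 * bt^2)) in E1, E2 by ring.
      assert (0 <= INR S * Tr * x * L) by (repeat apply Rmult_le_pos; lra).
      rewrite sqrt_2bt in E1, E2 by lra.
      rewrite E1, E2 in R.
      assert (0 <= 2 * bt * sqrt (Tr * ln N)) by (apply Rmult_le_pos; lra).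
      replace (4 * bt * sqrt (INR S * Tr * x * L)) with (2 * bt * sqrt (INR S * Tr * x * L) + 2 * bt * sqrt (INR S * Tr * x * L)) by ring.
      lra.
Qed.
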